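(* Let $k$ be a field and $\mathsf{E}$ a locally finite $k$-linear category. Then the contravariant functor $\mathcal{N}\mapsto\mathcal{N}^*=\operatorname{Hom}_k(\mathcal{N},k)$ from the category of locally finite right $\mathcal{C}_\mathsf{E}$-comodules to the category of locally finite left $\mathcal{C}_\mathsf{E}$-contramodules is fully faithful; i.e., for locally finite right $\mathcal{C}_\mathsf{E}$-comodules $\mathcal{M},\mathcal{N}$, the map $f\mapsto f^*$ is a bijection from comodule morphisms $\mathcal{M}\to\mathcal{N}$ to contramodule morphisms $\mathcal{N}^*\to\mathcal{M}^*$.
   Context: A small $k$-linear category $\mathsf{E}$ has finite-or-not $k$-vector spaces $\operatorname{Hom}_\mathsf{E}(x,y)$, $k$-bilinear associative composition and identities with $\mathrm{id}_x\ne0$. Write $x\preceq y$ if there are $n\ge1$ and objects $x=z_0,\dots,z_n=y$ with $\operatorname{Hom}_\mathsf{E}(z_{i-1},z_i)\neq0$ for all $i$. $\mathsf{E}$ is locally finite if all $\operatorname{Hom}_\mathsf{E}(x,y)$ are finite-dimensional and every $\{z:x\preceq z\preceq y\}$ is finite. $\mathcal{C}_\mathsf{E}=\bigoplus_{x,y}\mathcal{C}^{x,y}$, $\mathcal{C}^{x,y}=\operatorname{Hom}_\mathsf{E}(x,y)^*$; counit zero on $\mathcal{C}^{x,y}$ for $x\ne y$, evaluation at $\mathrm{id}_x$ on $\mathcal{C}^{x,x}$; comultiplication $\mathcal{C}^{x,y}\to\bigoplus_z\mathcal{C}^{x,z}\otimes\mathcal{C}^{z,y}$ dual to composition $g\otimes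 h\mapsto hg$. Let $e_x\in\mathcal{C}_\mathsf{E}^*$ be evaluation at $\mathrm{id}_x$ on $\mathcal{C}^{x,x}$ and zero elsewhere. A right comodule is $(\mathcal{N},\nu:\mathcal{N}\to\mathcal{N}\otimes_k\mathcal{C}_\mathsf{E})$ coassociative and counital; for $\varphi\in\mathcal{C}_\mathsf{E}^*$ put $\varphi\cdot n=(\mathrm{id}\otimes\varphi)\nu(n)$. One has $\mathcal{N}=\bigoplus_xe_x\cdot\mathcal{N}$; $\mathcal{N}$ is locally finite if each $e_x\cdot\mathcal{N}$ is finite-dimensional. A left contramodule over a coalgebra $(\mathcal{C},\mu,\epsilon)$ is a space $\mathfrak{P}$ with $\pi:\operatorname{Hom}_k(\mathcal{C},\mathfrak{P})\to\mathfrak{P}$ such that $\pi(c\mapsto\epsilon(c)p)=p$ and, under $\operatorname{Hom}_k(\mathcal{C},\operatorname{Hom}_k(\mathcal{C},\mathfrak{P}))\cong\operatorname{Hom}_k(\mathcal{C}\otimes\mathcal{C},\mathfrak{P})$, $f\mapsto(c'\otimes c''\mapsto f(c'')(c'))$, $\pi(c\mapsto\pi(f(c)))=\pi(f\circ\mu)$; morphisms commute with $\pi$. For $\varphi\in\mathcal{C}^*$ set $\varphi\cdot p=\pi(c\mapsto\varphi(c)p)$. For a left $\mathcal{C}_\mathsf{E}$-contramodule, $\mathfrak{P}\cong\prod_xe_x\cdot\mathfrak{P}$, and $\mathfrak{P}$ is locally finite if each $e_x\cdot\mathfrak{P}$ is finite-dimensional. For a right comodule $\mathcal{N}$, $\mathcal{N}^*$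 is a left contramodule with $\pi(g)(n)=\sum_ig(c_i)(n_i)$ where $\nu(n)=\sum_in_i\otimes c_i$. *)

(* Defs.v *)
From HB Require Import structures.
From mathcomp Require Import all_boot all_order all_algebra.
Unset Printing Implicit Defensive.
Import GRing.Theory.
Local Open Scope ring_scope.

(* A (small) k-linear category with finite-dimensional Hom spaces.
   [comp g h] is the composite "h o g" of g : x -> y and h : y -> z. *)
Record kcat (k : fieldType) := KCat {
  Obj : eqType;
  Hom : Obj -> Obj -> vectType k;
  comp : forall x y z, Hom x y -> Hom y z -> Hom x z;
  idm : forall x, Hom x x;
  comp_linl : forall x y z (a : k) (g1 g2 : Hom x y) (h : Hom y z),
      comp x y z (a *: g1 + g2) h = a *: comp x y z g1 h + comp x y z g2 h;
  comp_linr : forall x y z (a : k) (g : Hom x y) (h1 h2 : Hom y z),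
      comp x y z g (a *: h1 + h2) = a *: comp x y z g h1 + comp x y z g h2;
  comp_assoc : forall x y z w (f : Hom x y) (g : Hom y z) (h : Hom z w),
      comp x z w (comp x y z f g) h = comp x y w f (comp y z w g h);
  comp_idl : forall x y (g : Hom x y), comp x x y (idm x) g = g;
  comp_idr : forall x y (g : Hom x y), comp x y y g (idm y) = g;
  idm_neq0 : forall x, idm x != 0
}.
Arguments comp {k} _ {x y z} _ _.
Arguments idm {k} _ x.
Arguments Hom {k} _ _ _.
Arguments Obj {k} _.

Section Defs.
Variables (k : fieldType) (E : kcat k).

Definition nzhom (x y : Obj E) : Prop := exists g : Hom E x y, g != 0.

Inductive prec : Obj E -> Obj E -> Prop :=
| prec_one x y : nzhom x y -> prec x y
| prec_cons x y z : prec x y -> nzhom y z -> prec x z.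

(* local finiteness (Hom spaces are finite-dimensional by construction) *)
Definition locally_finite : Prop :=
  forall x y, exists s : seq (Obj E), forall z, prec x z -> prec z y -> z \in s.

(* The component C^{x,y} = Hom_E(x,y)^* of the coalgebra C_E. *)
Definition Ccomp (x y : Obj E) := 'Hom(Hom E x y, k^o).

(* The coaction nu : N -> N (x) C_E is encoded through
   the canonical isomorphism  N (x) C_E = (+)_{x,y} N (x) Hom(x,y)^*
   = (+)_{x,y} Hom_k(Hom(x,y), N)  (Hom(x,y) finite-dimensional):
   [coact n x y] is the (x,y)-component of nu(n), i.e. the linear map
   g |-> (id (x) ev_g) nu(n). *)
Record comodule := Comodule {
  ccarrier : lmodType k;
  coact : ccarrier -> forall x y : Obj E, Hom E x y -> ccarrier;
  coact_linl : forall (a : k) (n m : ccarrier) x y g,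
      coact (a *: n + m) x y g = a *: coact n x y g + coact m x y g;
  coact_linr : forall (n : ccarrier) x y (a : k) (g h : Hom E x y),
      coact n x y (a *: g + h) = a *: coact n x y g + coact n x y h;
  (* nu(n) lies in the direct sum: finitely many nonzero components *)
  coact_fin : forall n : ccarrier, exists s : seq (Obj E),
      forall x y g, (x \notin s) || (y \notin s) -> coact n x y g = 0;
  coact_assoc : forall (n : ccarrier) x z y (g : Hom E x z) (h : Hom E z y),
      coact (coact n z y h) x z g = coact n x y (comp E g h);
  coact_counit : forall (n : ccarrier) (s : seq (Obj E)), uniq s ->
      (forall x y g, (x \notin s) || (y \notin s) -> coact n x y g = 0) ->
      n = \sum_(x <- s) coact n x x (idm E x)
}.
Coercion ccarrier : comodule >-> lmodType.

Definition supp_in (N : comodule) (n : N) (s : seq (Obj E)) : Prop :=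
  forall x y g, (x \notin s) || (y \notin s) -> coact N n x y g = 0.

Definition eact (N : comodule) (x : Obj E) (n : N) : N := coact N n x x (idm E x).

Definition lf_comod (N : comodule) : Prop :=
  forall x, exists s : seq N, forall n : N,
    exists a : 'I_(size s) -> k, eact N x n = \sum_(i < size s) a i *: s`_i.

Definition comod_morph (M N : comodule) (f : {linear M -> N}) : Prop :=
  forall (m : M) x y g, coact N (f m) x y g = f (coact M m x y g).

Definition dualb (x y : Obj E) (j : 'I_(\dim {:Hom E x y})) : Ccomp x y :=
  linfun (fun v : Hom E x y => (coord (vbasis {:Hom E x y}) j v : k^o)).

(* For h : C^{x,y} -> N^* and T : Hom(x,y) -> N representing
   t = sum_i n_i (x) c_i in N (x) C^{x,y}, [contr h T] = sum_i h(c_i)(n_i).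
   (T corresponds to sum_j T(b_j) (x) b_j^* for any basis b.) *)
Definition contr (N : lmodType k) (x y : Obj E) (h : Ccomp x y -> N -> k)
    (T : Hom E x y -> N) : k :=
  \sum_(j < \dim {:Hom E x y}) h (dualb x y j) (T (vbasis {:Hom E x y})`_j).

(* [is_pi N g phi]: phi = pi_{N^*}(g) where g in Hom_k(C_E, N^* ) is given by
   its components g x y : C^{x,y} -> N^*  (Hom_k((+) C^{x,y}, P) = prod Hom_k(C^{x,y},P)),
   and pi(g)(n) = sum_i g(c_i)(n_i) for nu(n) = sum_i n_i (x) c_i. *)
Definition is_pi (N : comodule) (g : forall x y, Ccomp x y -> {scalar N})
    (phi : {scalar N}) : Prop :=
  forall (n : N) (s : seq (Obj E)), uniq s -> supp_in N n s ->
    phi n = \sum_(x <- s) \sum_(y <- s) contr N x y (fun c => g x y c : N -> k) (coact N n x y).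

Definition lin_family (N : comodule) (g : forall x y, Ccomp x y -> {scalar N}) :=
  forall x y (a : k) (c c' : Ccomp x y) (n : N),
    g x y (a *: c + c') n = a * g x y c n + g x y c' n.

Definition contra_morph (N M : comodule) (F : {scalar N} -> {scalar M}) : Prop :=
  (forall (a : k) (phi psi chi : {scalar N}),
      (forall n, chi n = a * phi n + psi n) ->
      forall m, F chi m = a * F phi m + F psi m) /\
  (forall g : forall x y, Ccomp x y -> {scalar N}, lin_family N g ->
      forall phi, is_pi N g phi -> is_pi M (fun x y c => F (g x y c)) (F phi)).

Definition dual_map (M N : comodule) (f : {linear M -> N}) :
  {scalar N} -> {scalar M} := fun phi => phi \o f.

End Defs.

Arguments comodule {k} E.
Arguments coact {k E c} n x y g : rename.
Arguments comod_morph {k E M N} f.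
Arguments contra_morph {k E N M} F.
Arguments dual_map {k E M N} f.
Arguments lf_comod {k E} N.
Arguments locally_finite {k} E.

(* Main.v *)
Require Import Defs.
From HB Require Import structures.
From mathcomp Require Import all_boot all_order all_algebra.
From Stdlib Require Import Classical IndefiniteDescription.
Import GRing.Theory.
Local Open Scope ring_scope.
Section Mk.
Variables (R : fieldType) (U : lmodType R) (f : U -> R) (Hf : scalar f).
Definition mkS := f.
HB.instance Definition _ := GRing.isLinear.Build R U R *%R mkS Hf.
Definition mkScalar : {scalar U} := mkS.
Lemma mkScalarE x : mkScalar x = f x. Proof. by []. Qed.
End Mk.
Arguments mkScalar {R U f} Hf.
Section Mk2.
Variables (R : fieldType) (U V : lmodType R) (f : U -> V) (Hf : linear f).
Definition mkL := f.
HB.instance Definition _ := GRing.isLinear.Build R U V *:%R mkL Hf.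
Definition mkLinear : {linear U -> V} := mkL.
Lemma mkLinearE x : mkLinear x = f x. Proof. by []. Qed.
End Mk2.
Arguments mkLinear {R U V f} Hf.

Section LinAlg.
Variables (K : fieldType) (V : lmodType K).

Definition lspan (s : seq V) (v : V) :=
  exists a : nat -> K, v = \sum_(i < size s) a i *: s`_i.
Definition lfree (s : seq V) :=
  forall a : nat -> K, \sum_(i < size s) a i *: s`_i = 0 ->
    forall i, (i < size s)%N -> a i = 0.

Lemma span_lin s c u v : lspan s u -> lspan s v -> lspan s (c *: u + v).
Proof.
move=> [a ->] [b ->]; exists (fun i => c * a i + b i).
rewrite scaler_sumr -big_split /=; apply: eq_bigr => i _.
by rewrite scalerDl scalerA.
Qed.

Lemma span0 s : lspan s 0.
Proof. by exists (fun _ => 0); rewrite big1 // => i _; rewrite scale0r. Qed.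

Lemma span_cons x s v : lspan s v -> lspan (x :: s) v.
Proof.
move=> [a ->]; exists (fun i => if i is j.+1 then a j else 0).
by rewrite /= big_ord_recl /= scale0r add0r.
Qed.

Lemma span_head x s : lspan (x :: s) x.
Proof.
exists (fun i => if i is 0%N then 1 else 0).
rewrite /= big_ord_recl /= scale1r big1 ?addr0 // => i _; by rewrite scale0r.
Qed.

Lemma free_extract s : exists b, lfree b /\ forall v, lspan s v -> lspan b v.
Proof.
elim: s => [|x s [b [fb sb]]].
  exists [::]; split; first by move=> a _ i.
  move=> v [a ->]; rewrite big_ord0; exact: span0.
have hv : forall v, lspan (x :: s) v -> exists c w, v = c *: x + w /\ lspan s w.
  move=> v [a ->]; exists (a 0%N), (\sum_(i < size s) a i.+1 *: s`_i).
  split; last by exists (fun i => a i.+1).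
  by rewrite /= big_ord_recl.
case: (classic (lspan b x)) => hx.
  exists b; split => // v /hv [c [w [-> /sb hw]]]; exact: span_lin.
exists (x :: b); split.
  move=> a; rewrite /= big_ord_recl /= => ha.
  have a0 : a 0%N = 0.
    case: (eqVneq (a 0%N) 0) => // hne; exfalso; apply: hx; exists (fun i => - (a 0%N)^-1 * a i.+1).
    apply: (scalerI hne).
    have -> : a 0%N *: x = - \sum_(i < size b) a i.+1 *: b`_i.
      by apply/eqP; rewrite -addr_eq0 ha.
    rewrite scaler_sumr -sumrN; apply: eq_bigr => i _.
    by rewrite !scalerA mulrA mulrN mulfV // mulN1r scaleNr.
  move: ha; rewrite a0 scale0r add0r => hb' [|i] //= hi.
  apply: (fb (fun i => a i.+1)) => //; by rewrite -[RHS]hb'.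
move=> v /hv [c [w [-> /sb hw]]]; apply: span_lin; first exact: span_head.
exact: span_cons.
Qed.

Lemma coords (P : V -> V) (Plin : forall c u v, P (c *: u + v) = c *: P u + P v)
  s (hs : forall n, lspan s (P n)) :
  exists b : seq V, exists c : nat -> {scalar V},
    forall n, P n = \sum_(i < size b) c i n *: b`_i.
Proof.
have [b [fb sb]] := free_extract s.
have hb : forall n, lspan b (P n) by move=> n; exact: sb.
pose A n := proj1_sig (constructive_indefinite_description _ (hb n)).
have HA : forall n, P n = \sum_(i < size b) A n i *: b`_i.
  by move=> n; rewrite /A; case: constructive_indefinite_description.
pose cf i n := if (i < size b)%N then A n i else 0.
have cl : forall i, scalar (cf i).
  move=> i c u v; rewrite /cf; case: ifP => hi; last by rewrite mulr0 addr0.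
  apply/eqP; rewrite -subr_eq0; apply/eqP.
  pose d j := A (c *: u + v) j - (c * A u j + A v j).
  apply: (fb d _ i hi).
  under eq_bigr => j _ do rewrite /d scalerBl scalerDl -scalerA.
  rewrite sumrB big_split /= -scaler_sumr -!HA Plin.
  by rewrite subrr.
exists b, (fun i => mkScalar (cl i)) => n.
rewrite HA; apply: eq_bigr => i _; by rewrite mkScalarE /cf ltn_ord.
Qed.

End LinAlg.
Arguments lspan {K V}.
Arguments lfree {K V}.
Import Defs.
Section Comod.
Variables (k : fieldType) (E : kcat k).

Lemma supp_ex (N : comodule E) (n : N) : exists s, uniq s /\ supp_in k E N n s.
Proof.
have [s hs] := coact_fin _ _ N n; exists (undup s); split; first exact: undup_uniq.
by move=> x y g; rewrite !mem_undup; exact: hs.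
Qed.

Lemma coactr0 (N : comodule E) (n : N) x y : coact n x y 0 = 0.
Proof.
have h := coact_linr _ _ N n x y 1 0 0; rewrite !scale1r addr0 in h.
by have := subrr (coact n x y 0); rewrite {1}h addrK.
Qed.

Lemma coactl0 (N : comodule E) x y g : coact (0 : N) x y g = 0.
Proof.
have h := coact_linl _ _ N 1 0 0 x y g; rewrite !scale1r addr0 in h.
by have := subrr (coact (0 : N) x y g); rewrite {1}h addrK.
Qed.

Lemma eact_lin (N : comodule E) x a (u v : N) :
  eact k E N x (a *: u + v) = a *: eact k E N x u + eact k E N x v.
Proof. exact: coact_linl. Qed.

Lemma lf_span (N : comodule E) : lf_comod N ->
  forall x, exists s, forall n, lspan s (eact k E N x n).
Proof.
move=> hN x; have [s hs] := hN x; exists s => n.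
have [a ha] := hs n.
exists (fun j => if insub j is Some i then a i else 0).
by rewrite ha; apply: eq_bigr => i _; rewrite valK.
Qed.

Lemma separation (N : comodule E) : lf_comod N ->
  forall v : N, (forall phi : {scalar N}, phi v = 0) -> v = 0.
Proof.
move=> hN v hv; have [s [us ss]] := @supp_ex N v.
rewrite (coact_counit _ _ N v s us ss) big1_seq // => x _.
have [s' hs'] := @lf_span N hN x.
have [b [c hc]] := @coords _ _ _ (@eact_lin N x) _ hs'.
rewrite -/(eact k E N x v) hc big1 // => i _.
by rewrite hv scale0r.
Qed.

Definition tr (x0 y0 : Obj E) (u : Hom E x0 y0) (x y : Obj E) : Hom E x y :=
  match x0 =P x, y0 =P y with
  | ReflectT ex, ReflectT ey =>
      eq_rect y0 (fun b => Hom E x b) (eq_rect x0 (fun a => Hom E a y0) u x ex) y ey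
  | _, _ => 0
  end.
Arguments tr {x0 y0} u x y.

Lemma tr_eq x0 y0 (u : Hom E x0 y0) : tr u x0 y0 = u.
Proof.
rewrite /tr; case: eqP => // e1; case: eqP => // e2.
by rewrite (eq_axiomK e1) (eq_axiomK e2).
Qed.

Lemma tr_neq x0 y0 (u : Hom E x0 y0) x y : (x != x0) || (y != y0) -> tr u x y = 0.
Proof.
rewrite /tr; case: eqP => // e1; case: eqP => // e2.
by subst; rewrite !eqxx.
Qed.

Lemma sum_tr (V : zmodType) (Phi : forall x y, Hom E x y -> V)
  (Phi0 : forall x y, Phi x y 0 = 0) x0 y0 (u : Hom E x0 y0) (s : seq (Obj E)) :
  uniq s ->
  \sum_(x <- s) \sum_(y <- s) Phi x y (tr u x y) =
  if (x0 \in s) && (y0 \in s) then Phi x0 y0 u else 0.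
Proof.
move=> us.
have hz : forall x y, (x != x0) || (y != y0) -> Phi x y (tr u x y) = 0.
  by move=> x y h; rewrite tr_neq // Phi0.
case: ifP => [/andP [hx hy]|hn].
  rewrite (bigD1_seq x0) //= (bigD1_seq y0) //= tr_eq.
  rewrite big1 ?addr0; last by move=> y hy'; rewrite hz // hy' orbT.
  rewrite big1 ?addr0 // => x hx'; rewrite big1 // => y _; by rewrite hz // hx'.
rewrite big1_seq // => x /andP [_ hx]; rewrite big1_seq // => y /andP [_ hy].
apply: hz; case: (eqVneq x x0) => [ex|//]; case: (eqVneq y y0) => [ey|]; last by rewrite orbT.
subst.
by rewrite hx hy in hn.
Qed.

Lemma contr_eval (P : lmodType k) x y (U : Hom E x y) (psi : {scalar P})
  (h : Ccomp k E x y -> P -> k) (T : Hom E x y -> P)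
  (hh : forall c p, h c p = c U * psi p)
  (Tl : forall a g g', T (a *: g + g') = a *: T g + T g') :
  contr k E P x y h T = psi (T U).
Proof.
rewrite /contr.
under eq_bigr => j _ do rewrite hh /dualb lfunE /=.
have -> : T U = mkLinear Tl U by [].
rewrite {2}(coord_vbasis (memvf U)) linear_sum raddf_sum.
by apply: eq_bigr => j _; rewrite linearZ /= linearZ.
Qed.

Section FSec.
Variables (M N : comodule E) (F : {scalar N} -> {scalar M}) (HF : contra_morph F).

Lemma Flin : forall (a : k) (phi psi chi : {scalar N}),
      (forall n, chi n = a * phi n + psi n) ->
      forall m, F chi m = a * F phi m + F psi m.
Proof. by case: HF. Qed.

Lemma F0 (chi : {scalar N}) : (forall n, chi n = 0) -> forall m, F chi m = 0.
Proof.
move=> hz m; have h := @Flin 1 chi chi chi.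
have {}h : F chi m = 1 * F chi m + F chi m by apply: h => n; rewrite hz mulr0 addr0.
by have := subrr (F chi m); rewrite {1}h mul1r addrK.
Qed.

Lemma zero_scal : scalar (fun _ : N => (0 : k)).
Proof. by move=> c u v; rewrite mulr0 addr0. Qed.

Lemma Fscale (a : k) (phi chi : {scalar N}) :
  (forall n, chi n = a * phi n) -> forall m, F chi m = a * F phi m.
Proof.
move=> h m; rewrite (@Flin a phi (mkScalar zero_scal) chi).
  by rewrite (@F0 (mkScalar zero_scal)) ?addr0.
by move=> n; rewrite h mkScalarE addr0.
Qed.

Lemma Fsum n (a : nat -> k) (ps : nat -> {scalar N}) (chi : {scalar N}) :
  (forall x, chi x = \sum_(i < n) a i * ps i x) ->
  forall m, F chi m = \sum_(i < n) a i * F (ps i) m.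
Proof.
elim: n chi => [|n IH] chi hc m.
  by rewrite big_ord0; apply: F0 => x; rewrite hc big_ord0.
have pl : scalar (fun x => \sum_(i < n) a i * ps i x).
  move=> c u v; rewrite mulr_sumr -big_split; apply: eq_bigr => i _.
  by rewrite linearP /= mulrDr mulrCA.
rewrite (@Flin (a n) (ps n) (mkScalar pl) chi).
  by rewrite (IH (mkScalar pl)) // big_ord_recr /= addrC.
by move=> x; rewrite hc big_ord_recr /= addrC.
Qed.

Lemma stepA x0 y0 (u : Hom E x0 y0) (phi chi : {scalar N}) :
  (forall n, chi n = phi (coact n x0 y0 u)) ->
  forall m, F chi m = F phi (coact m x0 y0 u).
Proof.
move=> hchi m.
have Gl : forall x y (c : Ccomp k E x y), scalar (fun n : N => c (tr u x y) * phi n).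
  by move=> x y c a n n'; rewrite linearP /= mulrDr mulrCA.
pose G x y c := mkScalar (Gl x y c).
have lf : lin_family k E N G.
  move=> x y a c c' n.
  change ((a *: c + c') (tr u x y) * phi n = a * (c (tr u x y) * phi n) + c' (tr u x y) * phi n).
  rewrite add_lfunE scale_lfunE /=.
  by rewrite mulrDl mulrA.
have pi : is_pi k E N G chi.
  move=> n s us ss; rewrite hchi.
  transitivity (\sum_(x <- s) \sum_(y <- s) phi (coact n x y (tr u x y))); last first.
    apply: eq_bigr => x _; apply: eq_bigr => y _; symmetry.
    apply: contr_eval => //; exact: coact_linr.
  rewrite (@sum_tr _ (fun x y g => phi (coact n x y g))) //; last first.
    by move=> x y; rewrite coactr0 raddf0.
  case: ifP => // hn; rewrite ss ?raddf0 //.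
  by rewrite -negb_and hn.
have [s [us ss]] := @supp_ex M m.
have [_ H2] := HF.
rewrite (H2 G lf chi pi m s us ss).
transitivity (\sum_(x <- s) \sum_(y <- s) F phi (coact m x y (tr u x y))).
  apply: eq_bigr => x _; apply: eq_bigr => y _.
  apply: contr_eval; last exact: coact_linr.
  by move=> c p; apply: Fscale.
rewrite (@sum_tr _ (fun x y g => F phi (coact m x y g))) //; last first.
  by move=> x y; rewrite coactr0 raddf0.
case: ifP => // hn; rewrite ss ?raddf0 //.
by rewrite -negb_and hn.
Qed.

End FSec.

Lemma part1 (M N : comodule E) (f : {linear M -> N}) :
  comod_morph f -> contra_morph (dual_map f).
Proof.
move=> hf; split.
  by move=> a phi psi chi h m; rewrite /dual_map /= h.
move=> g lf phi hphi m s us ss; rewrite /dual_map /=.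
have sf : supp_in k E N (f m) s.
  by move=> x y h hh; rewrite hf ss // raddf0.
rewrite (hphi (f m) s us sf); apply: eq_bigr => x _; apply: eq_bigr => y _.
rewrite /contr; apply: eq_bigr => j _; by rewrite hf.
Qed.

Lemma part2 (M N : comodule E) (hN : lf_comod N) (f g : {linear M -> N}) :
  (forall (phi : {scalar N}) (m : M), dual_map f phi m = dual_map g phi m) ->
  forall m : M, f m = g m.
Proof.
move=> h m; apply/eqP; rewrite -subr_eq0; apply/eqP; apply: (@separation N hN) => phi.
by rewrite raddfB; have := h phi m; rewrite /dual_map /= => ->; rewrite subrr.
Qed.

Lemma part3 (M N : comodule E) (hN : lf_comod N) (F : {scalar N} -> {scalar M})
  (HF : contra_morph F) :
  exists f : {linear M -> N}, comod_morph f /\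
    forall (phi : {scalar N}) (m : M), F phi m = dual_map f phi m.
Proof.
have hy : forall y, exists h : M -> N, forall (phi chi : {scalar N}),
    (forall n, chi n = phi (eact k E N y n)) -> forall m, phi (h m) = F chi m.
  move=> y; have [s hs] := @lf_span N hN y.
  have [b [c hc]] := @coords _ _ _ (@eact_lin N y) _ hs.
  exists (fun m => \sum_(i < size b) F (c i) m *: b`_i) => phi chi hchi m.
  rewrite (@Fsum M N F HF (size b) (fun i => phi b`_i) c chi).
    by rewrite linear_sum; apply: eq_bigr => i _; rewrite scalarZ mulrC.
  by move=> n; rewrite hchi hc linear_sum; apply: eq_bigr => i _; rewrite scalarZ mulrC.
pose H y := proj1_sig (constructive_indefinite_description _ (hy y)).
have HH : forall y (phi chi : {scalar N}), (forall n, chi n = phi (eact k E N y n)) ->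
    forall m, phi (H y m) = F chi m.
  by move=> y; rewrite /H; case: constructive_indefinite_description.
pose S m := proj1_sig (constructive_indefinite_description _ (@supp_ex M m)).
have HS : forall m, uniq (S m) /\ supp_in k E M m (S m).
  by move=> m; rewrite /S; case: constructive_indefinite_description.
pose f0 m := \sum_(y <- S m) H y m.
have compl : forall (phi : {scalar N}) y, scalar (fun n => phi (eact k E N y n)).
  by move=> phi y a u v; rewrite eact_lin linearP.
have key : forall (phi : {scalar N}) m, phi (f0 m) = F phi m.
  move=> phi m; have [us ss] := HS m.
  rewrite linear_sum.
  transitivity (\sum_(y <- S m) F phi (eact k E M y m)).
    apply: eq_bigr => y _; rewrite (HH y phi (mkScalar (compl phi y))) //.
    exact: (@stepA M N F HF y y (idm E y) phi).
  by rewrite -raddf_sum -(coact_counit _ _ M m).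
have f0l : linear f0.
  move=> a u v; apply/eqP; rewrite -subr_eq0; apply/eqP.
  apply: (@separation N hN) => phi.
  by rewrite linearB linearD /= scalarZ !key linearP /= subrr.
exists (mkLinear f0l); split.
  move=> m x y g.
  change (coact (f0 m) x y g = f0 (coact m x y g)).
  apply/eqP; rewrite -subr_eq0; apply/eqP; apply: (@separation N hN) => phi.
  have cs : scalar (fun n : N => phi (coact n x y g)).
    by move=> a u v; rewrite coact_linl linearP.
  have e1 := key (mkScalar cs) m.
  have e2 := key phi (coact m x y g).
  have e3 := @stepA M N F HF x y g phi (mkScalar cs) (fun n => erefl) m.
  rewrite linearB e2 -e3 -e1 /=; exact: subrr.
by move=> phi m; rewrite /dual_map /= key.
Qed.

End Comod.

Theorem proposition5p1 (k : fieldType) (E : kcat k) (hE : locally_finite E)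
    (M N : comodule E) (hM : lf_comod M) (hN : lf_comod N) :
  (forall f : {linear M -> N}, comod_morph f -> contra_morph (dual_map f)) /\
  (forall f g : {linear M -> N}, comod_morph f -> comod_morph g ->
     (forall (phi : {scalar N}) (m : M), dual_map f phi m = dual_map g phi m) ->
     forall m : M, f m = g m) /\
  (forall F : {scalar N} -> {scalar M}, contra_morph F ->
     exists f : {linear M -> N}, comod_morph f /\
       forall (phi : {scalar N}) (m : M), F phi m = dual_map f phi m).
Proof.
split; first exact: part1.
split; first by move=> f g _ _; exact: part2.
exact: part3.
Qed.
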